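(* Let $n\ge 2$, $k\ge0$, $\nu_1,\ldots,\nu_n>0$, and let $(j_1,\ldots,j_{n-1})$ be nonnegative integers with $\sum_{\ell=1}^{n-1}j_\ell=k$. Let \[ \psi_{j_1,\ldots,j_{n-1}} = CK_{n}\Big( \big(K_+^{[n-1]}\big)^{j_{n-1}} CK_{n-1}\Big( \cdots \big(K_+^{[3]}\big)^{j_3} CK_{3}\Big( \big(K_+^{[2]}\big)^{j_2} CK_{2}\big( x_1^{j_1}\big)\Big)\cdots\Big)\Big). \] Then for every $\ell\in\{2,\ldots,n\}$, \[ C_{[\ell]}\,\psi_{j_1,\ldots,j_{n-1}}=\lambda^{[\ell]}_{j_1,\ldots,j_{n-1}}\,\psi_{j_1,\ldots,j_{n-1}},\qquad \lambda^{[\ell]}_{j_1,\ldots,j_{n-1}}=\Big(\sum_{i=1}^{\ell-1}j_i+\sum_{i=1}^{\ell}\nu_i\Big)\Big(-1+\sum_{i=1}^{\ell-1}j_i+\sum_{i=1}^{\ell}\nu_i\Big). \]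
   Context: For a subset $B\subset[n]=\{1,\ldots,n\}$ define the differential operators on $\mathbb{R}[x_1,\ldots,x_n]$: $K_-^B=\sum_{j\in B}\partial_{x_j}$, $K_+^B=\sum_{j\in B}(x_j^2\partial_{x_j}+2\nu_jx_j)$, $K_0^B=\sum_{j\in B}x_j\partial_{x_j}+\sum_{j\in B}\nu_j$, and $C_B=(K_0^B)^2-K_0^B-K_+^BK_-^B$. Write $[m]=\{1,\ldots,m\}$. For $2\le m\le n$, $CK_m$ sends a polynomial $p(x_1,\ldots,x_{m-1})$ to $p(x_1-x_m,\ldots,x_{m-1}-x_m)$; $K_+^{[m]}$ acts on polynomials in $x_1,\ldots,x_m$. The resulting $\psi$ is regarded as a polynomial in $x_1,\ldots,x_n$. *)

(* Defs.v *)
From HB Require Import structures.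
From mathcomp Require Import all_boot all_order all_algebra.
From mathcomp Require Import mpoly.
Set Implicit Arguments. Unset Strict Implicit. Unset Printing Implicit Defensive.
Import Order.TTheory GRing.Theory Num.Theory.
Local Open Scope ring_scope.

(* Variables x_1,...,x_n of the paper are 'X_i for i : 'I_n, with the
   0-based shift: x_{a} (paper) = 'X_(a-1). *)
Section Ops.
Variables (R : realFieldType) (n : nat) (nu : 'I_n -> R).

(* the variable with 0-based index a (0 if a >= n) *)
Definition Xv (a : nat) : {mpoly R[n]} := \sum_(i < n | val i == a) 'X_i.

(* [m] = {1,...,m} as a subset of the index set (0-based: indices < m) *)
Definition first (m : nat) : {set 'I_n} := [set i : 'I_n | (val i < m)%N].

Definition Kminus (B : {set 'I_n}) (p : {mpoly R[n]}) : {mpoly R[n]} :=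
  \sum_(i in B) p^`M(i).

Definition Kplus (B : {set 'I_n}) (p : {mpoly R[n]}) : {mpoly R[n]} :=
  \sum_(i in B) ('X_i ^+ 2 * p^`M(i) + (2 * nu i) *: ('X_i * p)).

Definition Kzero (B : {set 'I_n}) (p : {mpoly R[n]}) : {mpoly R[n]} :=
  \sum_(i in B) ('X_i * p^`M(i)) + (\sum_(i in B) nu i) *: p.

Definition Cas (B : {set 'I_n}) (p : {mpoly R[n]}) : {mpoly R[n]} :=
  Kzero B (Kzero B p) - Kzero B p - Kplus B (Kminus B p).

(* CK_m : p(x_1,...,x_{m-1}) |-> p(x_1 - x_m, ..., x_{m-1} - x_m);
   the remaining variables are left unchanged. *)
Definition CK (m : nat) (p : {mpoly R[n]}) : {mpoly R[n]} :=
  p \mPo [tuple (if (val i < m.-1)%N then 'X_i - Xv m.-1 else 'X_i) | i < n].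

Variable j : nat -> nat. (* j_1, ..., j_{n-1} (1-based, other values unused) *)

Fixpoint psi_rec (m : nat) : {mpoly R[n]} :=
  match m with
  | 0 | 1 => Xv 0 ^+ j 1
  | 2 => CK 2 (Xv 0 ^+ j 1)
  | m'.+1 => CK m'.+1 (iter (j m') (Kplus (first m')) (psi_rec m'))
  end.

Definition psi : {mpoly R[n]} := psi_rec n.

Definition lambda (l : nat) : R :=
  let s := (\sum_(1 <= i < l) (j i)%:R) + \sum_(i : 'I_n | (val i < l)%N) nu i in
  s * (-1 + s).

End Ops.

(* Main.v *)
Require Import Defs.
From HB Require Import structures.
From mathcomp Require Import all_boot all_order all_algebra.
From mathcomp Require Import mpoly.
From mathcomp Require Import ring.
Import Order.TTheory GRing.Theory Num.Theory.
Local Open Scope ring_scope.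
Set Implicit Arguments. Unset Strict Implicit. Unset Printing Implicit Defensive.

Section Main.
Variables (R : realFieldType) (n : nat) (nu : 'I_n -> R).
Local Notation mp := {mpoly R[n]}.

Lemma comm_gen (A Bo G : 'I_n -> mp -> mp) (B1 B2 : {set 'I_n}) p :
 (forall i, {morph A i : x y / x + y}) -> (forall i, A i 0 = 0) ->
 (forall i, {morph Bo i : x y / x + y}) -> (forall i, Bo i 0 = 0) ->
 (forall i j q, A i (Bo j q) = Bo j (A i q) + (if i == j then G i q else 0)) ->
 \sum_(i in B1) A i (\sum_(j in B2) Bo j p)
   = \sum_(j in B2) Bo j (\sum_(i in B1) A i p) + \sum_(i in B1 :&: B2) G i p.
Proof.
move=> AD A0 BD B0 h.
under eq_bigr => i _ do rewrite (big_morph (A i) (AD i) (A0 i)).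
under eq_bigr => i _ do under eq_bigr => j _ do rewrite h.
under eq_bigr => i _ do rewrite big_split /=.
rewrite big_split /= exchange_big /=.
congr (_ + _).
  by apply: eq_bigr => j _; rewrite (big_morph (Bo j) (BD j) (B0 j)).
rewrite [RHS](eq_bigl (fun i => (i \in B1) && (i \in B2))); last by move=> i; rewrite inE.
rewrite big_mkcondr /=; apply: eq_bigr => i _.
case: (boolP (i \in B2)) => iB.
  rewrite (bigD1 i) //= eqxx big1 ?addr0 // => j /andP[_ /negbTE].
  by rewrite eq_sym => ->.
by apply: big1 => j jB; case: eqP => // e; subst; rewrite jB in iB.
Qed.

Lemma mderivXU (i j : 'I_n) : ('X_j : mp)^`M(i) = (j == i)%:R.
Proof.
rewrite mderivX mnm1E; case: (eqVneq j i) => [->|ne]; last by rewrite scale0r.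
rewrite scale1r (_ : (U_(i) - U_(i))%MM = 0%MM) ?mpolyX0 //.
by apply/mnmP => k; rewrite mnmBE mnm0E subnn.
Qed.

Definition Lop i (p:mp) := p^`M(i).
Definition Hop i (p:mp) := 'X_i * p^`M(i) + nu i *: p.
Definition Eop i (p:mp) := 'X_i ^+ 2 * p^`M(i) + (2 * nu i) *: ('X_i * p).
Definition Nop i (p:mp) := 'X_i * p^`M(i).

Ltac simp i j ne ne2 := rewrite /Lop /Hop /Eop /Nop ?expr2 ?mderivD ?mderivZ ?mderivM ?mderivXU ?mderivM ?mderivXU;
  case: (eqVneq i j) => [<-|ne]; [rewrite ?eqxx | have ne2 := ne; rewrite eq_sym in ne2; rewrite ?(negbTE ne) ?(negbTE ne2)];
  rewrite /= -?mul_mpolyC ?mpolyCM ?rmorph_nat ?mpolyC_nat ?mul1r ?mul0r ?addr0 ?add0r; try rewrite [(_^`M(j))^`M(i)]mderiv_comm; try ring.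

Lemma commLH i j q : Lop i (Hop j q) = Hop j (Lop i q) + (if i == j then Lop i q else 0).
Proof. simp i j ne ne2. Qed.
Lemma commLE i j q : Lop i (Eop j q) = Eop j (Lop i q) + (if i == j then 2%:R *: Hop i q else 0).
Proof. simp i j ne ne2. Qed.
Lemma commHE i j q : Hop i (Eop j q) = Eop j (Hop i q) + (if i == j then Eop i q else 0).
Proof. simp i j ne ne2. Qed.
Lemma commNE i j q : Nop i (Eop j q) = Eop j (Nop i q) + (if i == j then Eop i q else 0).
Proof. simp i j ne ne2. Qed.

Lemma LopD i : {morph Lop i : x y / x + y}. Proof. by move=> x y; rewrite /Lop mderivD. Qed.
Lemma Lop0 i : Lop i 0 = 0. Proof. by rewrite /Lop mderiv0. Qed.
Lemma HopD i : {morph Hop i : x y / x + y}.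
Proof. by move=> x y; rewrite /Hop mderivD mulrDr scalerDr; ring. Qed.
Lemma Hop0 i : Hop i 0 = 0. Proof. by rewrite /Hop mderiv0 mulr0 scaler0 addr0. Qed.
Lemma EopD i : {morph Eop i : x y / x + y}.
Proof. by move=> x y; rewrite /Eop mderivD !mulrDr scalerDr; ring. Qed.
Lemma Eop0 i : Eop i 0 = 0. Proof. by rewrite /Eop mderiv0 !mulr0 scaler0 addr0. Qed.
Lemma NopD i : {morph Nop i : x y / x + y}.
Proof. by move=> x y; rewrite /Nop mderivD mulrDr. Qed.
Lemma Nop0 i : Nop i 0 = 0. Proof. by rewrite /Nop mderiv0 mulr0. Qed.

Lemma KminusE B p : Kminus B p = \sum_(i in B) Lop i p. Proof. by []. Qed.
Lemma KplusE B p : Kplus nu B p = \sum_(i in B) Eop i p. Proof. by []. Qed.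
Lemma KzeroE B p : Kzero nu B p = \sum_(i in B) Hop i p.
Proof. by rewrite /Kzero /Hop big_split /= scaler_suml. Qed.

Lemma Kminus_lin B : linear (@Kminus R n B).
Proof.
move=> c x y; rewrite /Kminus scaler_sumr -big_split /=.
by apply: eq_bigr => i _; rewrite mderivD mderivZ.
Qed.
HB.instance Definition _ B := GRing.isLinear.Build R mp mp _ (@Kminus R n B) (Kminus_lin B).
Lemma HopZ i c x : Hop i (c *: x) = c *: Hop i x.
Proof. by rewrite /Hop mderivZ scalerDr scalerAr !scalerA (mulrC c). Qed.
Lemma EopZ i c x : Eop i (c *: x) = c *: Eop i x.
Proof. by rewrite /Eop mderivZ scalerDr !scalerAr !scalerA (mulrC c). Qed.
Lemma Kzero_lin B : linear (Kzero nu B).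
Proof.
move=> c x y; rewrite !KzeroE scaler_sumr -big_split /=.
by apply: eq_bigr => i _; rewrite HopD HopZ.
Qed.
HB.instance Definition _ B := GRing.isLinear.Build R mp mp _ (Kzero nu B) (Kzero_lin B).
Lemma Kplus_lin B : linear (Kplus nu B).
Proof.
move=> c x y; rewrite !KplusE scaler_sumr -big_split /=.
by apply: eq_bigr => i _; rewrite EopD EopZ.
Qed.
HB.instance Definition _ B := GRing.isLinear.Build R mp mp _ (Kplus nu B) (Kplus_lin B).

Lemma KzeroZ B a x : Kzero nu B (a *: x) = a *: Kzero nu B x.
Proof. exact: linearZZ. Qed.
Lemma KplusZ B a x : Kplus nu B (a *: x) = a *: Kplus nu B x.
Proof. exact: linearZZ. Qed.
Lemma Kplus0 B : Kplus nu B 0 = 0.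
Proof. exact: raddf0. Qed.

Definition Eu (p : mp) := \sum_(i in [set: 'I_n]) Nop i p.

Lemma KL_H B q : Kminus B (Kzero nu B q) = Kzero nu B (Kminus B q) + Kminus B q.
Proof.
rewrite !KzeroE !KminusE (comm_gen _ _ _ (@LopD) (@Lop0) (@HopD) (@Hop0) (@commLH)).
by rewrite setIid.
Qed.
Lemma KL_E B q : Kminus B (Kplus nu B q) = Kplus nu B (Kminus B q) + 2%:R *: Kzero nu B q.
Proof.
rewrite !KplusE !KzeroE !KminusE (comm_gen _ _ _ (@LopD) (@Lop0) (@EopD) (@Eop0) (@commLE)).
by rewrite setIid scaler_sumr.
Qed.
Lemma KH_E B q : Kzero nu B (Kplus nu B q) = Kplus nu B (Kzero nu B q) + Kplus nu B q.
Proof.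
rewrite !KplusE !KzeroE (comm_gen _ _ _ (@HopD) (@Hop0) (@EopD) (@Eop0) (@commHE)).
by rewrite setIid.
Qed.
Lemma KL_E_disj (B B' : {set 'I_n}) q : [disjoint B & B'] ->
  Kminus B (Kplus nu B' q) = Kplus nu B' (Kminus B q).
Proof.
move=> d; rewrite !KplusE !KminusE (comm_gen _ _ _ (@LopD) (@Lop0) (@EopD) (@Eop0) (@commLE)).
by move/disjoint_setI0: d => ->; rewrite big_set0 addr0.
Qed.
Lemma KH_E_disj (B B' : {set 'I_n}) q : [disjoint B & B'] ->
  Kzero nu B (Kplus nu B' q) = Kplus nu B' (Kzero nu B q).
Proof.
move=> d; rewrite !KplusE !KzeroE (comm_gen _ _ _ (@HopD) (@Hop0) (@EopD) (@Eop0) (@commHE)).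
by move/disjoint_setI0: d => ->; rewrite big_set0 addr0.
Qed.
Lemma Eu_E B q : Eu (Kplus nu B q) = Kplus nu B (Eu q) + Kplus nu B q.
Proof.
rewrite /Eu !KplusE (comm_gen _ _ _ (@NopD) (@Nop0) (@EopD) (@Eop0) (@commNE)).
by rewrite setTI.
Qed.
Lemma D_E i (B : {set 'I_n}) q : i \notin B -> (Kplus nu B q)^`M(i) = Kplus nu B (q^`M(i)).
Proof.
move=> iB; have := comm_gen [set i] B q (@LopD) (@Lop0) (@EopD) (@Eop0) (@commLE).
rewrite !big_set1 /Lop => ->.
rewrite (_ : [set i] :&: B = set0) ?big_set0 ?addr0 //.
by apply/setP => k; rewrite !inE; case: eqP => // ->; rewrite (negbTE iB).
Qed.

Lemma commEE i j q : Eop i (Eop j q) = Eop j (Eop i q) + (if i == j then 0 else 0).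
Proof. rewrite if_same addr0; simp i j ne ne2. Qed.

Lemma KE_E (B B' : {set 'I_n}) q : Kplus nu B (Kplus nu B' q) = Kplus nu B' (Kplus nu B q).
Proof.
rewrite !KplusE (comm_gen _ _ _ (@EopD) (@Eop0) (@EopD) (@Eop0) (@commEE)).
by rewrite big1_eq addr0.
Qed.

Lemma abs_comm (H L E : mp -> mp) :
  (forall x y, H (x + y) = H x + H y) ->
  (forall x y, E (x + y) = E x + E y) ->
  (forall x y, E (x - y) = E x - E y) ->
  (forall c x, E (c *: x) = c *: E x) ->
  (forall q, H (E q) = E (H q) + E q) ->
  (forall q, L (E q) = E (L q) + 2%:R *: H q) ->
  forall p, H (H (E p)) - H (E p) - E (L (E p)) = E (H (H p) - H p - E (L p)).
Proof.
move=> hHD hED hEB hEZ hHE hLE p.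
rewrite !hHE hHD !hHE hLE hED hEZ !hEB scaler_nat; ring.
Qed.

Lemma Cas_E B q : Cas nu B (Kplus nu B q) = Kplus nu B (Cas nu B q).
Proof.
apply: abs_comm => //.
- exact: raddfD.
- exact: raddfD.
- exact: raddfB.
- by move=> c x; rewrite linearZZ.
- exact: KH_E.
- exact: KL_E.
Qed.

Lemma abs_comm0 (H L E : mp -> mp) :
  (forall x y, E (x - y) = E x - E y) ->
  (forall q, H (E q) = E (H q)) ->
  (forall q, L (E q) = E (L q)) ->
  forall p, H (H (E p)) - H (E p) - E (L (E p)) = E (H (H p) - H p - E (L p)).
Proof. by move=> hEB hHE hLE p; rewrite !hHE hLE !hEB. Qed.

Lemma Cas_E_disj (B B' : {set 'I_n}) q : [disjoint B & B'] ->
  Cas nu B (Kplus nu B' q) = Kplus nu B' (Cas nu B q).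
Proof.
by move=> d; rewrite /Cas !(KH_E_disj _ d) (KL_E_disj _ d) KE_E !raddfB.
Qed.

Lemma CasD B x y : Cas nu B (x + y) = Cas nu B x + Cas nu B y.
Proof.
rewrite /Cas (raddfD (Kzero nu B) x y) (raddfD (Kzero nu B) (Kzero nu B x)).
rewrite (raddfD (Kminus B) x y) (raddfD (Kplus nu B) (Kminus B x)); ring.
Qed.

Lemma Cas_Esub (B B2 : {set 'I_n}) q : B \subset B2 ->
  Cas nu B (Kplus nu B2 q) = Kplus nu B2 (Cas nu B q).
Proof.
move=> sB.
have split x : Kplus nu B2 x = Kplus nu B x + Kplus nu (B2 :\: B) x.
  by rewrite !KplusE (big_setID B) /= (setIidPr sB).
have d : [disjoint B & B2 :\: B].
  by rewrite disjoints_subset setDE setCI setCK subsetUr.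
by rewrite !split CasD Cas_E Cas_E_disj.
Qed.

Section Chain.
Variable t : n.-tuple mp.
Definition chainP (p : mp) := forall i,
  (p \mPo t)^`M(i) = \sum_(k < n) (p^`M(k) \mPo t) * (tnth t k)^`M(i).

Lemma chain1 : chainP 1.
Proof.
move=> i; rewrite comp_mpoly1 -mpolyC1 mderivC big1 // => k _.
by rewrite mderivC comp_mpolyC mpolyC0 mul0r.
Qed.

Lemma chainX k : chainP 'X_k.
Proof.
move=> i; rewrite comp_mpolyXU -tnth_nth (bigD1 k) //= mderivXU eqxx.
rewrite big1 ?addr0; first by rewrite rmorph1 mul1r.
by move=> j /negbTE ne; rewrite mderivXU eq_sym ne rmorph0 mul0r.
Qed.

Lemma chainM p q : chainP p -> chainP q -> chainP (p * q).
Proof.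
move=> hp hq i; rewrite rmorphM mderivM hp hq mulr_suml mulr_sumr -big_split /=.
apply: eq_bigr => k _; rewrite mderivM rmorphD !rmorphM; ring.
Qed.

Lemma chainD p q : chainP p -> chainP q -> chainP (p + q).
Proof.
move=> hp hq i; rewrite comp_mpolyD mderivD hp hq -big_split /=.
by apply: eq_bigr => k _; rewrite mderivD comp_mpolyD mulrDl.
Qed.

Lemma chainZ c p : chainP p -> chainP (c *: p).
Proof.
move=> hp i; rewrite comp_mpolyZ mderivZ hp scaler_sumr.
by apply: eq_bigr => k _; rewrite mderivZ comp_mpolyZ scalerAl.
Qed.

Lemma chain_all p : chainP p.
Proof.
elim/mpolyind: p.
  move=> i; rewrite comp_mpoly0 mderiv0 big1 // => k _.
  by rewrite mderiv0 comp_mpoly0 mul0r.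
move=> c m p _ _ hp; apply: chainD => //; apply: chainZ.
rewrite mpolyXE_id; apply: (big_ind chainP) => //.
- exact: chain1.
- exact: chainM.
move=> k _; elim: (m k) => [|e ih]; first by rewrite expr0; exact: chain1.
by rewrite exprS; apply: chainM => //; exact: chainX.
Qed.
End Chain.

Section CKsec.
Variable Mo : 'I_n.
Local Notation T := (@CK R n (val Mo).+1).
Local Notation c := ('X_Mo : mp).

Lemma Xv_val : Xv R n (val Mo) = 'X_Mo.
Proof.
rewrite /Xv (eq_bigl (fun i => i == Mo)) ?big_pred1_eq // => i.

Qed.

Definition tCK := [tuple (if (val i < (val Mo).+1.-1)%N then 'X_i - Xv R n (val Mo).+1.-1 else 'X_i) | i < n].
Lemma CKE p : T p = p \mPo tCK. Proof. by []. Qed.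
Lemma tCKE k : tnth tCK k = 'X_k - 'X_Mo *+ (val k < val Mo).
Proof.
rewrite tnth_mktuple /= Xv_val; case: ifP => _; first by rewrite mulr1n.
by rewrite mulr0n subr0.
Qed.

Lemma CKD x y : T (x + y) = T x + T y. Proof. by rewrite !CKE comp_mpolyD. Qed.
Lemma CKB x y : T (x - y) = T x - T y. Proof. by rewrite !CKE comp_mpolyB. Qed.
Lemma CKZ a x : T (a *: x) = a *: T x. Proof. by rewrite !CKE comp_mpolyZ. Qed.
Lemma CK0 : T 0 = 0. Proof. by rewrite !CKE comp_mpoly0. Qed.
Lemma CKM x y : T (x * y) = T x * T y. Proof. by rewrite !CKE rmorphM. Qed.
Lemma CKX k : T 'X_k = 'X_k - 'X_Mo *+ (val k < val Mo).
Proof. by rewrite CKE comp_mpolyXU -tnth_nth tCKE. Qed.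
Lemma CK_sum (P : pred 'I_n) F : T (\sum_(i | P i) F i) = \sum_(i | P i) T (F i).
Proof. by rewrite CKE raddf_sum. Qed.

Definition Ssum p := \sum_(k < n | (val k < val Mo)%N) T (p^`M(k)).

Lemma CK_D p i : (T p)^`M(i) = T (p^`M(i)) - (i == Mo)%:R * Ssum p.
Proof.
rewrite CKE chain_all.
under eq_bigr => k _ do rewrite tCKE mderivB mderivMn !mderivXU mulrBr.
rewrite big_split /= (bigD1 i) //= eqxx mulr1 big1 ?addr0; last first.
  by move=> k /negbTE ne; rewrite ne mulr0.
congr (_ + _); rewrite sumrN; congr (- _).
rewrite /Ssum mulr_sumr [RHS]big_mkcond /=; apply: eq_bigr => k _.
rewrite -CKE; case: (val k < val Mo)%N; last by rewrite mulr0n mulr0.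
by rewrite mulr1n eq_sym mulrC.
Qed.

Lemma neMo i : (val i < val Mo)%N -> (i == Mo) = false.
Proof. by move=> h; apply/negbTE/eqP => e; rewrite e ltnn in h. Qed.

Section WithB.
Variable B : {set 'I_n}.
Hypothesis hB : forall i, i \in B -> (val i < val Mo)%N.

Lemma TL p : Kminus B (T p) = T (Kminus B p).
Proof.
rewrite !KminusE CK_sum; apply: eq_bigr => i iB.
by rewrite /Lop CK_D neMo ?hB // mul0r subr0.
Qed.

Lemma TH p : Kzero nu B (T p) = T (Kzero nu B p) + c * T (Kminus B p).
Proof.
rewrite !KzeroE !KminusE !CK_sum mulr_sumr -big_split; apply: eq_bigr => i iB.
rewrite /Hop /Lop CK_D neMo ?hB // mul0r subr0 CKD CKZ CKM CKX hB //= mulr1n; ring.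
Qed.

Lemma TE p : Kplus nu B (T p) =
  T (Kplus nu B p) + 2%:R *: (c * T (Kzero nu B p)) + c ^+ 2 * T (Kminus B p).
Proof.
rewrite !KplusE !KzeroE !KminusE !CK_sum mulr_sumr scaler_sumr mulr_sumr -!big_split.
apply: eq_bigr => i iB.
rewrite /Eop /Hop /Lop CK_D neMo ?hB // mul0r subr0 !CKD !CKZ !expr2 !CKM CKX hB //= mulr1n.
rewrite -!mul_mpolyC ?mpolyCM ?mpolyC_nat; ring.
Qed.

Lemma cL q : Kminus B (c * q) = c * Kminus B q.
Proof.
rewrite !KminusE mulr_sumr; apply: eq_bigr => i iB.
by rewrite /Lop mderivM mderivXU eq_sym neMo ?hB // mul0r add0r.
Qed.
Lemma cH q : Kzero nu B (c * q) = c * Kzero nu B q.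
Proof.
rewrite !KzeroE mulr_sumr; apply: eq_bigr => i iB.
rewrite /Hop mderivM mderivXU eq_sym neMo ?hB // mul0r add0r scalerAr; ring.
Qed.

Lemma abs_T (H L E Tf : mp -> mp) (cc : mp) :
  (forall x y, H (x + y) = H x + H y) ->
  (forall x, H (cc * x) = cc * H x) ->
  (forall x y, Tf (x + y) = Tf x + Tf y) ->
  (forall x y, Tf (x - y) = Tf x - Tf y) ->
  (forall q, L (Tf q) = Tf (L q)) ->
  (forall q, H (Tf q) = Tf (H q) + cc * Tf (L q)) ->
  (forall q, E (Tf q) = Tf (E q) + 2%:R *: (cc * Tf (H q)) + cc ^+ 2 * Tf (L q)) ->
  (forall q, L (H q) = H (L q) + L q) ->
  forall p, H (H (Tf p)) - H (Tf p) - E (L (Tf p)) = Tf (H (H p) - H p - E (L p)).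
Proof.
move=> hHD hHc hTD hTB hL hH hE hLH p.
rewrite hL hE !hH hHD hHc !hH !hTB hLH hTD scaler_nat; ring.
Qed.

Lemma Cas_T p : Cas nu B (T p) = T (Cas nu B p).
Proof.
rewrite /Cas; apply: (abs_T (H := Kzero nu B) (L := Kminus B) (E := Kplus nu B) (cc := c)).
- exact: raddfD.
- exact: cH.
- exact: CKD.
- exact: CKB.
- exact: TL.
- exact: TH.
- exact: TE.
- exact: KL_H.
Qed.
End WithB.

Lemma top q d :
  (forall i : 'I_n, (val Mo <= val i)%N -> q^`M(i) = 0) ->
  Eu q = d *: q ->
  [/\ (forall i : 'I_n, ((val Mo).+1 <= val i)%N -> (T q)^`M(i) = 0),
      Eu (T q) = d *: T q &
      Cas nu (first n (val Mo).+1) (T q) =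
        ((d + \sum_(i in first n (val Mo).+1) nu i) *
          (-1 + (d + \sum_(i in first n (val Mo).+1) nu i))) *: T q].
Proof.
move=> hq hE.
have hD : forall i : 'I_n, ((val Mo).+1 <= val i)%N -> (T q)^`M(i) = 0.
  move=> i hi; rewrite CK_D hq ?(ltnW hi) // CK0.
  rewrite (_ : (i == Mo) = false) ?mul0r ?subr0 //.
  by apply/negbTE/eqP => e; rewrite e ltnn in hi.
have E1 : Eu (T q) = \sum_(i in [set: 'I_n]) 'X_i * T (q^`M(i)) - 'X_Mo * Ssum q.
  rewrite /Eu; under eq_bigr => i _ do rewrite /Nop CK_D mulrBr.
  rewrite sumrB; congr (_ - _).
  rewrite (bigD1 Mo) ?inE //= eqxx mul1r big1 ?addr0 //.
  by move=> i /andP[_ /negbTE ne]; rewrite ne mul0r mulr0.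
have E2 : T (Eu q) = \sum_(i in [set: 'I_n]) 'X_i * T (q^`M(i)) - 'X_Mo * Ssum q.
  rewrite /Eu CK_sum; under eq_bigr => i _ do rewrite /Nop CKM CKX mulrBl.
  rewrite sumrB; congr (_ - _).
  rewrite /Ssum mulr_sumr [RHS]big_mkcond /=.
  apply: eq_big => [i|i _]; first by rewrite inE.
  by case: (val i < val Mo)%N; rewrite ?mulr1n ?mulr0n ?mul0r.
have hEu : Eu (T q) = d *: T q by rewrite E1 -E2 hE CKZ.
have hKm : Kminus (first n (val Mo).+1) (T q) = 0.
  rewrite KminusE; under eq_bigr => i _ do rewrite /Lop CK_D.
  rewrite sumrB.
  have S2 : \sum_(i in first n (val Mo).+1) (i == Mo)%:R * Ssum q = Ssum q.
    rewrite (bigD1 Mo) ?inE //= eqxx mul1r big1 ?addr0 //.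
    by move=> i /andP[_ /negbTE ne]; rewrite ne mul0r.
  have S1 : \sum_(i in first n (val Mo).+1) T (q^`M(i)) = Ssum q.
    rewrite (bigD1 Mo) ?inE //= hq // CK0 add0r /Ssum; apply: eq_bigl => i.
    by rewrite inE ltnS ltn_neqAle val_eqE andbC.
  by rewrite S1 S2 subrr.
have hK0 : Kzero nu (first n (val Mo).+1) (T q) =
    (d + \sum_(i in first n (val Mo).+1) nu i) *: T q.
  rewrite /Kzero scalerDl -hEu; congr (_ + _).
  rewrite /Eu [RHS](big_setID (first n (val Mo).+1)) /= setTI [X in _ + X]big1 ?addr0 //.
  move=> i; rewrite !inE -leqNgt andbT => hi.
  by rewrite /Nop hD // mulr0.
split => //; rewrite /Cas. set z := Kzero nu _ (CK _ q). have -> : z = _ := hK0. rewrite KzeroZ -/z. have -> : z = _ := hK0. set w := Kminus _ _. have -> : w = 0 := hKm. rewrite Kplus0 subr0 scalerA -scalerBl.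
congr (_ *: _); ring.
Qed.
End CKsec.

Lemma EuM p q : Eu (p * q) = Eu p * q + p * Eu q.
Proof.
rewrite /Eu mulr_suml mulr_sumr -big_split /=; apply: eq_bigr => i _.
by rewrite /Nop mderivM; ring.
Qed.
Lemma EuX a : Eu 'X_a = 'X_a.
Proof.
rewrite /Eu (bigD1 a) ?inE //= /Nop mderivXU eqxx mulr1 big1 ?addr0 //.
by move=> i /andP[_ ne]; rewrite mderivXU eq_sym (negbTE ne) mulr0.
Qed.
Lemma EuXn a k : Eu ('X_a ^+ k) = k%:R *: 'X_a ^+ k.
Proof.
elim: k => [|k ih]; first by rewrite expr0 scale0r /Eu big1 // => i _; rewrite /Nop -mpolyC1 mderivC mulr0.
by rewrite exprS EuM EuX ih -scalerAr -natr1 scalerDl scale1r addrC.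
Qed.
Lemma DXn a i k : a != i -> ('X_a ^+ k : mp)^`M(i) = 0.
Proof.
move=> ne; elim: k => [|k ih]; first by rewrite expr0 -mpolyC1 mderivC.
by rewrite exprS mderivM ih mderivXU (negbTE ne) mul0r mulr0 addr0.
Qed.

Lemma iterD (B : {set 'I_n}) i k p : i \notin B ->
  (iter k (Kplus nu B) p)^`M(i) = iter k (Kplus nu B) (p^`M(i)).
Proof. by move=> iB; elim: k => //= k ih; rewrite D_E // ih. Qed.
Lemma iterZ (B : {set 'I_n}) k a p :
  iter k (Kplus nu B) (a *: p) = a *: iter k (Kplus nu B) p.
Proof. by elim: k => //= k ih; rewrite ih KplusZ. Qed.
Lemma iter0 (B : {set 'I_n}) k : iter k (Kplus nu B) 0 = 0.
Proof. by elim: k => //= k ih; rewrite ih Kplus0. Qed.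
Lemma iterEu (B : {set 'I_n}) k d p : Eu p = d *: p ->
  Eu (iter k (Kplus nu B) p) = (d + k%:R) *: iter k (Kplus nu B) p.
Proof.
move=> h; elim: k => [|k ih] /=; first by rewrite addr0.
by rewrite Eu_E ih KplusZ -natr1 addrA !scalerDl scale1r.
Qed.
Lemma iterCas (B B2 : {set 'I_n}) k p : B \subset B2 ->
  Cas nu B (iter k (Kplus nu B2) p) = iter k (Kplus nu B2) (Cas nu B p).
Proof. by move=> s; elim: k => //= k ih; rewrite Cas_Esub // ih. Qed.

Variable j : nat -> nat.
Definition dd m : R := \sum_(1 <= i < m) (j i)%:R.

Lemma lambdaE l : lambda nu j l =
  (dd l + \sum_(i in first n l) nu i) * (-1 + (dd l + \sum_(i in first n l) nu i)).
Proof.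
by rewrite /lambda /dd (eq_bigl (fun i : 'I_n => i \in first n l)) // => i; rewrite inE.
Qed.

Lemma psi_props m : (2 <= m <= n)%N ->
  [/\ forall i : 'I_n, (m <= val i)%N -> (psi_rec nu j m)^`M(i) = 0,
      Eu (psi_rec nu j m) = dd m *: psi_rec nu j m &
      forall l, (2 <= l <= m)%N ->
        Cas nu (first n l) (psi_rec nu j m) = lambda nu j l *: psi_rec nu j m].
Proof.
case: m => [|[|m]] //; elim: m => [|m ih].
  case/andP=> _ h2; pose Mo : 'I_n := Ordinal h2.
  have X0 : Xv R n 0 = 'X_(Ordinal (ltnW h2)).
    by rewrite /Xv (eq_bigl (fun i => i == Ordinal (ltnW h2))) ?big_pred1_eq // => i; rewrite val_eqE.
  have [] := @top Mo (Xv R n 0 ^+ j 1) (dd 2).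
  - move=> i hi; rewrite X0 DXn //; apply/negP => /eqP e; rewrite -e /= in hi.
    by rewrite ltnn in hi.
  - by rewrite X0 EuXn /dd big_nat1.
  move=> h1 h2' h3; split => //.
  move=> l /andP[hl1 hl2]; have -> : l = 2 by apply/eqP; rewrite eqn_leq hl2.
  by rewrite h3 lambdaE.
move=> /andP[_ hm].
have [I1 I2 I3] := ih (ltnW hm).
pose Mo : 'I_n := Ordinal hm.
set B := first n m.+2.
set q := iter (j m.+2) (Kplus nu B) (psi_rec nu j m.+2).
have hq : forall i : 'I_n, (val Mo <= val i)%N -> q^`M(i) = 0.
  move=> i hi; rewrite /q iterD ?I1 ?iter0 //.
  by rewrite inE -leqNgt.
have hEq : Eu q = dd m.+3 *: q.
  by rewrite /q (iterEu _ _ I2) [dd m.+3]/dd big_nat_recr.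
have [T1 T2 T3] := @top Mo q (dd m.+3) hq hEq.
split; [exact: T1 | exact: T2 |].
move=> l /andP[hl1]; rewrite leq_eqVlt => /orP[/eqP ->|hl]; first by rewrite T3 lambdaE.
have hl' : (2 <= l <= m.+2)%N by rewrite hl1.
rewrite /= -/B -/q (Cas_T (Mo := Mo)); last first.
  by move=> i; rewrite inE /= => hi; exact: leq_trans hi hl.
rewrite /q iterCas ?I3 // ?iterZ ?CKZ //.
by apply/subsetP => i; rewrite !inE => hi; exact: leq_trans hi hl.
Qed.
End Main.

Theorem theorem3p4 (R : realFieldType) (n k : nat) (nu : 'I_n -> R)
    (j : nat -> nat) :
  (2 <= n)%N ->
  (forall i, 0 < nu i) ->
  (\sum_(1 <= l < n) j l)%N = k ->
  forall l : nat, (2 <= l <= n)%N ->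
    Cas nu (first n l) (psi nu j) = lambda nu j l *: psi nu j.
Proof.
move=> hn _ _ l hl.
have hh : (2 <= n <= n)%N by rewrite hn leqnn.
have [_ _ h] := psi_props nu j hh.
exact: h.
Qed.
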